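(* Let $(X,d)$ be a complete $\mathrm{CAT}(0)$-space, $f:X\to\mathbb{R}$ a lower semi-continuous quasi-convex function, $x_0\in X$ and $(\tau_k)_{k\in\mathbb N}$ a sequence of positive numbers. Suppose a sequence $(x^k)_{k\ge0}$ exists with $x^0=x_0$ and $x^k\in\mathcal J^f_{\tau_k}(x^{k-1})$ for all $k\in\mathbb N$. Then: (i) $d(x^l,x^m)\le d(x^k,x^m)$ for all $0\le k<l<m$; (ii) setting $T_0:=0$, $T_k:=\tau_1+\dots+\tau_k$ and $\ell:=\lim_k T_k\in(0,\infty]$, the curve $\xi:[0,\ell)\to X$ defined by $\xi(t):=\gamma_{x^{k-1}x^k}\big((t-T_{k-1})/\tau_k\big)$ for $t\in[T_{k-1},T_k)$, $k\in\mathbb N$, is self-contracted.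
   Context: A metric space is geodesic if any two points $x,y$ are joined by a curve $\gamma:[0,1]\to X$ with $\gamma(0)=x$, $\gamma(1)=y$, $d(\gamma(s),\gamma(t))=|t-s|d(x,y)$ (a minimal geodesic). A geodesic metric space $(X,d)$ is a $\mathrm{CAT}(0)$-space if for all $x,y,z\in X$ and every minimal geodesic $\gamma$ from $y$ to $z$, $d^2(x,\gamma(s))\le(1-s)d^2(x,y)+sd^2(x,z)-(1-s)sd^2(y,z)$ for all $s\in[0,1]$; then minimal geodesics are unique, denoted $\gamma_{xy}$. $f$ is quasi-convex if $f(\gamma_{xy}(s))\le\max\{f(x),f(y)\}$ for all $x,y\in X$, $s\in(0,1)$. For $\tau>0$, $\mathcal J^f_\tau(x):=\{z\in X: f(z)+d^2(x,z)/(2\tau)=\inf_{w\in X}\{f(w)+d^2(x,w)/(2\tau)\}\}$. A map $\xi:[0,\ell)\to X$ is self-contracted if $d(\xi(t_2),\xi(t_3))\le d(\xi(t_1),\xi(t_3))$ for all $0\le t_1\le t_2\le t_3<\ell$. *)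

(* Defs.v *)
From Stdlib Require Import Reals Lra.
Open Scope R_scope.

Section MetricDefs.
Context {X : Type} (d : X -> X -> R).

Definition is_metric : Prop :=
  (forall x y, 0 <= d x y) /\
  (forall x y, d x y = 0 <-> x = y) /\
  (forall x y, d x y = d y x) /\
  (forall x y z, d x z <= d x y + d y z).

(* gamma : [0,1] -> X is a minimal geodesic from x to y
   (only its values on [0,1] matter) *)
Definition is_min_geodesic (x y : X) (gamma : R -> X) : Prop :=
  gamma 0 = x /\ gamma 1 = y /\
  forall s t, 0 <= s <= 1 -> 0 <= t <= 1 ->
    d (gamma s) (gamma t) = Rabs (t - s) * d x y.

Definition is_geodesic_space : Prop :=
  forall x y, exists gamma, is_min_geodesic x y gamma.

Definition is_CAT0 : Prop :=
  is_geodesic_space /\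
  forall x y z gamma, is_min_geodesic y z gamma ->
    forall s, 0 <= s <= 1 ->
      (d x (gamma s))^2 <= (1 - s) * (d x y)^2 + s * (d x z)^2
                           - (1 - s) * s * (d y z)^2.

Definition is_complete : Prop :=
  forall u : nat -> X,
    (forall eps, 0 < eps -> exists N, forall n m, (N <= n)%nat -> (N <= m)%nat ->
        d (u n) (u m) < eps) ->
    exists l, forall eps, 0 < eps -> exists N, forall n, (N <= n)%nat -> d (u n) l < eps.

Definition lower_semicontinuous (f : X -> R) : Prop :=
  forall x eps, 0 < eps -> exists delta, 0 < delta /\
    forall y, d x y < delta -> f x - eps < f y.

(* quasi-convexity along (the, unique in CAT(0)) minimal geodesics *)
Definition quasi_convex (f : X -> R) : Prop :=
  forall x y gamma, is_min_geodesic x y gamma ->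
    forall s, 0 < s < 1 -> f (gamma s) <= Rmax (f x) (f y).

Definition in_J (f : X -> R) (tau : R) (x z : X) : Prop :=
  forall w, f z + (d x z)^2 / (2 * tau) <= f w + (d x w)^2 / (2 * tau).

End MetricDefs.

Fixpoint Tsum (tau : nat -> R) (k : nat) : R :=
  match k with
  | O => 0
  | S k' => Tsum tau k' + tau (S k')
  end.

(* t ∈ [0, ell) where ell = lim_k T_k ∈ (0, +oo] *)
Definition in_dom (tau : nat -> R) (t : R) : Prop :=
  0 <= t /\ exists k, t < Tsum tau k.

Definition self_contracted {X : Type} (d : X -> X -> R) (tau : nat -> R)
  (xi : R -> X) : Prop :=
  forall t1 t2 t3, 0 <= t1 -> t1 <= t2 -> t2 <= t3 -> in_dom tau t3 ->
    d (xi t2) (xi t3) <= d (xi t1) (xi t3).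

(* Main.v *)
Require Import Defs.
From Stdlib Require Import Reals Lra Psatz Lia.
Open Scope R_scope.

Lemma sq_le a b : 0 <= a -> 0 <= b -> a^2 <= b^2 -> a <= b.
Proof. intros. nra. Qed.
Lemma sq_mono a b : 0 <= a -> a <= b -> a^2 <= b^2.
Proof. intros. nra. Qed.

Lemma geo_props (X : Type) (d : X -> X -> R) x y g s :
  is_min_geodesic d x y g -> 0 <= s <= 1 ->
  d x (g s) = s * d x y /\ d (g s) y = (1 - s) * d x y.
Proof.
  intros [H0 [H1 H2]] Hs. split.
  - pose proof (H2 0 s ltac:(lra) Hs) as E. rewrite H0 in E. rewrite E.
    rewrite Rabs_pos_eq by lra. ring.
  - pose proof (H2 s 1 Hs ltac:(lra)) as E. rewrite H1 in E. rewrite E.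
    rewrite Rabs_pos_eq by lra. ring.
Qed.

Lemma limit_arg A B C : 0 <= C -> (forall s, 0 < s < 1 -> A <= B - (1 - s) * C) -> A <= B - C.
Proof.
  intros HC H. destruct (Rle_or_lt A (B - C)) as [h|h]; auto.
  set (e := A - (B - C)). assert (He : 0 < e) by (unfold e; lra).
  set (s := e / (2 * (C + e))).
  assert (Hs2 : s * (2 * (C + e)) = e) by (unfold s; field; lra).
  assert (Hs : 0 < s < 1).
  { assert (0 < s) by (unfold s; apply Rdiv_lt_0_compat; lra). split; nra. }
  specialize (H s Hs). unfold e in *. nra.
Qed.

Lemma obtuse (X : Type) (d : X -> X -> R) w z p gam :
  is_metric d -> is_CAT0 d -> is_min_geodesic d z p gam ->
  (forall s, 0 < s < 1 -> d w z <= d w (gam s)) ->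
  d w z ^2 + d z p ^2 <= d w p ^2.
Proof.
  intros Hm [_ Hc] Hg H.
  destruct Hm as [Hpos _].
  enough (d w z ^ 2 <= d w p ^ 2 - d z p ^ 2) by lra.
  apply limit_arg. { pose proof (Hpos z p). nra. }
  intros s Hs.
  pose proof (sq_mono _ _ (Hpos w z) (H s Hs)) as h1.
  pose proof (Hc w z p gam Hg s ltac:(lra)) as h2.
  apply (Rmult_le_reg_l s); [lra|].
  replace (s * (d w p ^ 2 - (1 - s) * d z p ^ 2)) with (s * d w p ^ 2 - (1 - s) * s * d z p ^ 2) by ring.
  nra.
Qed.

Lemma key (X : Type) (d : X -> X -> R) (f : X -> R) tau x z gam a p :
  is_metric d -> is_CAT0 d -> quasi_convex d f -> 0 < tau ->
  in_J d f tau x z -> is_min_geodesic d x z gam -> 0 <= a <= 1 ->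
  f p <= f z -> d z p <= d (gam a) p.
Proof.
  intros Hm Hc Hq Ht HJ Hg Ha Hp.
  pose proof Hm as [Hpos [Hid [Hsym Htri]]].
  assert (Hy : forall y, f y <= f z -> d (gam a) z <= d (gam a) y).
  { intros y Hy.
    assert (E : d x z ^2 <= d x y ^2).
    { pose proof (HJ y) as h.
      assert (h2 : d x z ^ 2 / (2 * tau) <= d x y ^ 2 / (2 * tau)) by lra.
      unfold Rdiv in h2. apply Rmult_le_reg_r in h2; auto.
      apply Rinv_0_lt_compat; lra. }
    apply sq_le in E; auto.
    destruct (geo_props X d x z gam a Hg Ha) as [e1 e2].
    pose proof (Htri x (gam a) y). rewrite e2. nra. }
  destruct Hc as [Hgeo Hcat].
  destruct (Hgeo z p) as [g2 Hg2].
  assert (O := obtuse X d (gam a) z p g2 Hm (conj Hgeo Hcat) Hg2).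
  assert (d (gam a) z ^ 2 + d z p ^ 2 <= d (gam a) p ^ 2).
  { apply O. intros s Hs. apply Hy.
    pose proof (Hq z p g2 Hg2 s Hs). unfold Rmax in H. destruct (Rle_dec (f z) (f p)); lra. }
  apply sq_le; auto. pose proof (Hpos (gam a) z). nra.
Qed.

Lemma seg_mono (X : Type) (d : X -> X -> R) u v g p s1 s2 :
  is_metric d -> is_CAT0 d -> is_min_geodesic d u v g ->
  (forall s, 0 <= s <= 1 -> d v p <= d (g s) p) ->
  0 <= s1 -> s1 <= s2 -> s2 <= 1 -> s1 < 1 -> d (g s2) p <= d (g s1) p.
Proof.
  intros Hm Hc Hg Hv h1 h2 h3 h4.
  pose proof Hm as [Hpos [Hid [Hsym Htri]]].
  destruct Hg as [G0 [G1 G2]].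
  set (eta := fun r => g (s1 + r * (1 - s1))).
  assert (He : is_min_geodesic d (g s1) v eta).
  { unfold eta; split; [|split].
    - f_equal; ring.
    - rewrite <- G1. f_equal; ring.
    - intros a b Ha Hb. rewrite G2 by nra. rewrite <- G1 at 2. rewrite G2 by lra.
      replace (s1 + b * (1 - s1) - (s1 + a * (1 - s1))) with ((b - a) * (1 - s1)) by ring.
      rewrite Rabs_mult. rewrite (Rabs_pos_eq (1 - s1)) by lra.
      replace (1 - s1 - 0) with (1 - s1) by ring.
      ring. }
  set (r := (s2 - s1) / (1 - s1)).
  assert (Hr2 : r * (1 - s1) = s2 - s1) by (unfold r; field; lra).
  assert (Hr : 0 <= r <= 1).
  { assert (0 <= r) by (unfold r; apply Rmult_le_pos; [lra|left; apply Rinv_0_lt_compat; lra]). split; nra. }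
  destruct Hc as [_ Hcat].
  pose proof (Hcat p (g s1) v eta He r Hr) as C.
  assert (E : eta r = g s2) by (unfold eta; f_equal; lra).
  rewrite E in C.
  pose proof (Hv s1 ltac:(lra)) as V.
  rewrite (Hsym p (g s2)), (Hsym p (g s1)), (Hsym p v) in C.
  apply sq_le; auto.
  pose proof (sq_mono _ _ (Hpos v p) V).
  pose proof (Hpos (g s1) v).
  assert (0 <= (1 - r) * r * d (g s1) v ^ 2) by (apply Rmult_le_pos; [nra| apply pow_le; auto]).
  assert (r * (d v p ^ 2) <= r * (d (g s1) p ^ 2)) by (apply Rmult_le_compat_l; lra).
  lra.
Qed.

Lemma Tsum_mono tau : (forall k, (1 <= k)%nat -> 0 < tau k) ->
  forall i j, (i <= j)%nat -> Tsum tau i <= Tsum tau j.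
Proof.
  intros Ht i j Hij. induction Hij. lra. simpl. pose proof (Ht (S m) ltac:(lia)). lra.
Qed.

Lemma find_seg tau t : 0 <= t -> forall K, t < Tsum tau K ->
  exists j, Tsum tau j <= t < Tsum tau (S j).
Proof.
  intros H0 K. induction K; simpl; intros H. lra.
  destruct (Rlt_or_le t (Tsum tau K)). auto. exists K. simpl. lra.
Qed.

Lemma seg_order tau : (forall k, (1 <= k)%nat -> 0 < tau k) ->
  forall j1 j2 t1 t2, Tsum tau j1 <= t1 -> t2 < Tsum tau (S j2) -> t1 <= t2 -> (j1 <= j2)%nat.
Proof.
  intros Ht j1 j2 t1 t2 a b c. destruct (Compare_dec.le_lt_dec j1 j2); auto.
  pose proof (Tsum_mono tau Ht (S j2) j1 l). lra.
Qed.

Lemma param_range a b : 0 < a -> 0 <= b < a -> 0 <= b / a < 1.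
Proof.
  intros Ha Hb. assert (E : b / a * a = b) by (field; lra).
  assert (0 <= b / a) by (apply Rmult_le_pos; [lra| left; apply Rinv_0_lt_compat; lra]).
  split; nra.
Qed.

Lemma param_order a b c : 0 < a -> b <= c -> b / a <= c / a.
Proof. intros. apply Rmult_le_compat_r; [left; apply Rinv_0_lt_compat|]; lra. Qed.

Theorem mainTheorem12 (X : Type) (d : X -> X -> R)
  (Hmet : is_metric d) (Hcat : is_CAT0 d) (Hcomp : is_complete d)
  (f : X -> R) (Hlsc : lower_semicontinuous d f) (Hqc : quasi_convex d f)
  (x0 : X) (tau : nat -> R) (Htau : forall k, (1 <= k)%nat -> 0 < tau k)
  (x : nat -> X) (Hx0 : x 0%nat = x0)
  (HxJ : forall k, (1 <= k)%nat -> in_J d f (tau k) (x (k - 1)%nat) (x k))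
  (g : nat -> R -> X)
  (Hg : forall k, (1 <= k)%nat -> is_min_geodesic d (x (k - 1)%nat) (x k) (g k))
  (xi : R -> X)
  (Hxi : forall k t, (1 <= k)%nat ->
     Tsum tau (k - 1) <= t < Tsum tau k ->
     xi t = g k ((t - Tsum tau (k - 1)) / tau k)) :
  (forall k l m, (k < l)%nat -> (l < m)%nat -> d (x l) (x m) <= d (x k) (x m)) /\
  self_contracted d tau xi.
Proof.
  pose proof Hmet as [Hpos [Hid [Hsym Htri]]].
  assert (Hg' : forall j, is_min_geodesic d (x j) (x (S j)) (g (S j))).
  { intro j. pose proof (Hg (S j) ltac:(lia)) as H. replace (S j - 1)%nat with j in H by lia. exact H. }
  assert (HJ' : forall j, in_J d f (tau (S j)) (x j) (x (S j))).
  { intro j. pose proof (HxJ (S j) ltac:(lia)) as H. replace (S j - 1)%nat with j in H by lia. exact H. }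
  assert (Ht' : forall j, 0 < tau (S j)) by (intro j; apply Htau; lia).
  assert (Hxi' : forall j t, Tsum tau j <= t < Tsum tau (S j) ->
            xi t = g (S j) ((t - Tsum tau j) / tau (S j))).
  { intros j t H. pose proof (Hxi (S j) t ltac:(lia)) as E. replace (S j - 1)%nat with j in E by lia. auto. }
  assert (G0 : forall j, g (S j) 0 = x j) by (intro j; apply (Hg' j)).
  assert (F1 : forall j, f (x (S j)) <= f (x j)).
  { intro j. pose proof (HJ' j (x j)) as H.
    assert (d (x j) (x j) = 0) by (apply Hid; auto). rewrite H0 in H.
    assert (0 <= d (x j) (x (S j)) ^ 2 / (2 * tau (S j))).
    { apply Rmult_le_pos. apply pow2_ge_0. left; apply Rinv_0_lt_compat. pose proof (Ht' j); lra. }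
    unfold Rdiv in *. rewrite pow_i in H by lia. lra. }
  assert (F2 : forall i j, (i <= j)%nat -> f (x j) <= f (x i)).
  { intros i j H. induction H. lra. pose proof (F1 m). lra. }
  split.
  - assert (step : forall j m, (S j <= m)%nat -> d (x (S j)) (x m) <= d (x j) (x m)).
    { intros j m H. pose proof (key X d f (tau (S j)) (x j) (x (S j)) (g (S j)) 0 (x m)
        Hmet Hcat Hqc (Ht' j) (HJ' j) (Hg' j) ltac:(lra) (F2 _ _ H)) as K.
      rewrite G0 in K. exact K. }
    intros k l m Hkl Hlm.
    assert (Hkl' : (k <= l)%nat) by lia. clear Hkl.
    induction Hkl'. lra.
    pose proof (step m0 m ltac:(lia)). pose proof (IHHkl' ltac:(lia)). lra.
  - intros t1 t2 t3 H1 H12 H23 [H3 [K HK]].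
    destruct (find_seg tau t3 ltac:(lra) K HK) as [jm S3].
    destruct (find_seg tau t2 ltac:(lra) K ltac:(lra)) as [j2 S2].
    destruct (find_seg tau t1 ltac:(lra) K ltac:(lra)) as [j1 S1].
    assert (O12 : (j1 <= j2)%nat) by (apply (seg_order tau Htau j1 j2 t1 t2); lra).
    assert (O23 : (j2 <= jm)%nat) by (apply (seg_order tau Htau j2 jm t2 t3); lra).
    rewrite (Hxi' _ _ S1), (Hxi' _ _ S2), (Hxi' _ _ S3).
    set (s1 := (t1 - Tsum tau j1) / tau (S j1)).
    set (s2 := (t2 - Tsum tau j2) / tau (S j2)).
    set (s3 := (t3 - Tsum tau jm) / tau (S jm)).
    assert (R1 : 0 <= s1 < 1) by (apply param_range; [auto| simpl in S1; lra]).
    assert (R2 : 0 <= s2 < 1) by (apply param_range; [auto| simpl in S2; lra]).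
    assert (R3 : 0 <= s3 < 1) by (apply param_range; [auto| simpl in S3; lra]).
    set (p := g (S jm) s3).
    assert (P1 : f p <= f (x jm)).
    { unfold p. destruct (Req_dec s3 0) as [e|e].
      - rewrite e, G0. lra.
      - pose proof (Hqc _ _ _ (Hg' jm) s3 ltac:(lra)). pose proof (F1 jm).
        unfold Rmax in H. destruct (Rle_dec (f (x jm)) (f (x (S jm)))); lra. }
    assert (P2 : forall j, (j < jm)%nat -> forall s, 0 <= s <= 1 -> d (x (S j)) p <= d (g (S j) s) p).
    { intros j Hj s Hs. apply (key X d f (tau (S j)) (x j)); auto.
      pose proof (F2 (S j) jm Hj). lra. }
    assert (P3 : forall i i', (i <= i')%nat -> (i' <= jm)%nat -> d (x i') p <= d (x i) p).
    { intros i i' H. induction H; intros. lra.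
      pose proof (P2 m ltac:(lia) 0 ltac:(lra)) as Q. rewrite G0 in Q. pose proof (IHle ltac:(lia)). lra. }
    assert (Dseg : forall a b, 0 <= a <= 1 -> 0 <= b <= 1 -> a <= b -> b <= s3 ->
              d (g (S jm) b) p <= d (g (S jm) a) p).
    { intros a b Ha Hb Hab Hb3. unfold p. destruct (Hg' jm) as [_ [_ G2]].
      rewrite (G2 b s3), (G2 a s3) by lra.
      rewrite !Rabs_pos_eq by lra. pose proof (Hpos (x jm) (x (S jm))). nra. }
    assert (Upper : forall j s, (j <= jm)%nat -> 0 <= s < 1 -> (j = jm -> s <= s3) ->
              d (g (S j) s) p <= d (x j) p).
    { intros j s Hj Hs Hjs. destruct (Nat.eq_dec j jm) as [e|e].
      - subst j. rewrite <- G0. apply Dseg; try lra. specialize (Hjs eq_refl). lra.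
      - rewrite <- G0. apply (seg_mono X d (x j) (x (S j))); auto; try lra.
        apply P2; lia. }
    destruct (Nat.eq_dec j1 j2) as [e12|n12].
    + subst j2. assert (s1 <= s2) by (apply param_order; [auto|lra]).
      destruct (Nat.eq_dec j1 jm) as [e|n].
      * subst j1. apply Dseg; try lra. apply param_order; [auto|]. lra.
      * apply (seg_mono X d (x j1) (x (S j1))); auto; try lra.
        apply P2; lia.
    + assert (U : d (g (S j2) s2) p <= d (x j2) p).
      { apply Upper; auto. intro e. subst j2. apply param_order; [auto|lra]. }
      pose proof (P3 (S j1) j2 ltac:(lia) O23).
      pose proof (P2 j1 ltac:(lia) s1 ltac:(lra)).
      fold p. lra.
Qed.
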